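(* Let $N\ge0$ be an integer. For generic complex $a,b,c,d,q$, the unique coefficients $C_k^l$ ($0\le k,l\le N$) in the polynomial identity $$(ax;q^{-1})_k\,(bx;q^{-1})_{N-k}=\sum_{l=0}^N C_k^l\,(cx;q)_l\,(dx;q)_{N-l}$$ are $$C_k^l=q^{l(l-N)}\binom{N}{l}_q\frac{(q^{1-N}b/d;q)_l\,(q^{1-N}b/c;q)_{N-l}\,(q^{1-k}a/c;q)_k}{(q^{l-N}c/d;q)_l\,(q^{-l}d/c;q)_{N-l}\,(q^{1-N}b/c;q)_k}\;{}_4\phi_3\!\left[\begin{matrix}q^{-k},q^{-l},q^{k-N}b/a,q^{l-N}c/d\\ q^{-N},c/a,q^{1-N}b/d\end{matrix};q,q\right].$$
   Context: $(a;q)_k=\prod_{j=0}^{k-1}(1-aq^j)$ (for any base, so $(a;q^{-1})_k=\prod_{j=0}^{k-1}(1-aq^{-j})$), $\binom{N}{l}_q=\frac{(q;q)_N}{(q;q)_l(q;q)_{N-l}}$, and ${}_4\phi_3\!\left[\begin{matrix}a_1,\dots,a_4\\ b_1,b_2,b_3\end{matrix};q,z\right]=\sum_{k\ge0}\frac{(a_1,\dots,a_4;q)_k}{(q,b_1,b_2,b_3;q)_k}z^k$ (terminating). *)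

(* Defs.v *)
From mathcomp Require Import all_boot all_order all_algebra.
From mathcomp Require Import Rstruct complex.
From mathcomp Require Import mpoly.
Set Implicit Arguments. Unset Strict Implicit. Unset Printing Implicit Defensive.
Import Order.TTheory GRing.Theory Num.Theory.
Local Open Scope ring_scope.

Notation C := (Rdefinitions.R[i]).

Definition qpoch (a q : C) (k : nat) : C := \prod_(j < k) (1 - a * q ^+ j).

Definition qpochX (a q : C) (k : nat) : {poly C} :=
  \prod_(j < k) (1 - (a * q ^+ j) *: 'X).

Definition qbinom (q : C) (N l : nat) : C :=
  qpoch q q N / (qpoch q q l * qpoch q q (N - l)).

(* terminating 4phi3, summed over j = 0..M (in our use a1 = q^{-k} with
   k <= M, so all terms with j > k vanish and this is the full series) *)
Definition phi43 (a1 a2 a3 a4 b1 b2 b3 q z : C) (M : nat) : C :=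
  \sum_(j < M.+1)
    (qpoch a1 q j * qpoch a2 q j * qpoch a3 q j * qpoch a4 q j) /
    (qpoch q q j * qpoch b1 q j * qpoch b2 q j * qpoch b3 q j) * z ^+ j.

Definition Ccoef (N : nat) (a b c d q : C) (k l : nat) : C :=
  q ^ (l%:Z * (l%:Z - N%:Z)) * qbinom q N l *
  ((qpoch (q ^ (1 - N%:Z) * b / d) q l *
    qpoch (q ^ (1 - N%:Z) * b / c) q (N - l) *
    qpoch (q ^ (1 - k%:Z) * a / c) q k) /
   (qpoch (q ^ (l%:Z - N%:Z) * c / d) q l *
    qpoch (q ^ (- l%:Z) * d / c) q (N - l) *
    qpoch (q ^ (1 - N%:Z) * b / c) q k)) *
  phi43 (q ^ (- k%:Z)) (q ^ (- l%:Z)) (q ^ (k%:Z - N%:Z) * b / a)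
        (q ^ (l%:Z - N%:Z) * c / d)
        (q ^ (- N%:Z)) (c / a) (q ^ (1 - N%:Z) * b / d) q q N.

Definition pt5 (a b c d q : C) : 'I_5 -> C :=
  fun i => nth 0 [:: a; b; c; d; q] i.

Definition expansion (N : nat) (a b c d q : C) (k : nat) (D : nat -> C) : Prop :=
  qpochX a q^-1 k * qpochX b q^-1 (N - k) =
  \sum_(l < N.+1) D l *: (qpochX c q l * qpochX d q (N - l)).

(* Main.v *)
Require Import Defs.
From mathcomp Require Import all_boot all_order all_algebra.
From mathcomp Require Import Rstruct complex.
From mathcomp Require Import mpoly.
From mathcomp.algebra_tactics Require Import ring.
From mathcomp Require Import zify.
Import Order.TTheory GRing.Theory Num.Theory.
Local Open Scope ring_scope.
Set Implicit Arguments. Unset Strict Implicit. Unset Printing Implicit Defensive.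

Lemma qpS (u s : C) n : qpoch u s n.+1 = qpoch u s n * (1 - u * s ^+ n).
Proof. by rewrite /qpoch big_ord_recr. Qed.

Lemma qpL (u s : C) n : qpoch u s n.+1 = (1 - u) * qpoch (u * s) s n.
Proof.
rewrite /qpoch big_ord_recl expr0 mulr1; congr (_ * _).
by apply: eq_bigr => i _; rewrite /= exprS mulrA.
Qed.

Lemma qp0 (u s : C) : qpoch u s 0 = 1.
Proof. by rewrite /qpoch big_ord0. Qed.

Lemma qpX0 (u s : C) : qpochX u s 0 = 1.
Proof. by rewrite /qpochX big_ord0. Qed.

Lemma qpXS (u s : C) n : qpochX u s n.+1 = qpochX u s n * (1 - (u * s ^+ n) *: 'X).
Proof. by rewrite /qpochX big_ord_recr. Qed.

Lemma qpXD (u s : C) m n :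
  qpochX u s (m + n) = qpochX u s m * qpochX (u * s ^+ m) s n.
Proof.
rewrite /qpochX big_split_ord; congr (_ * _).
by apply: eq_bigr => i _; rewrite /= exprD mulrA.
Qed.

Lemma qp_neq0 (u s : C) n : (forall t, (t < n)%N -> u * s ^+ t != 1) -> qpoch u s n != 0.
Proof.
move=> h; rewrite /qpoch; apply/prodf_neq0 => i _.
by rewrite subr_eq0 eq_sym; apply: h.
Qed.

Lemma pascal (K : nat) (Phi : nat -> nat -> {poly C}) (tau : nat -> {poly C})
   (c lam mu ee ff : nat -> nat -> C) (bb : nat -> C) :
 tau 0 = Phi 0 0 -> c 0 0 = 1 ->
 (forall m, tau m.+1 = tau m * (1 - bb m *: 'X)) ->
 (forall i r, Phi i r.+1 = Phi i r * (1 - ee i r *: 'X)) ->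
 (forall i r, Phi i.+1 r = Phi i r * (1 - ff i r *: 'X)) ->
 (forall i r, (i + r < K)%N -> lam i r + mu i r = 1) ->
 (forall i r, (i + r < K)%N -> lam i r * ee i r + mu i r * ff i r = bb (i + r)%N) ->
 (forall r, (r < K)%N -> c 0 r.+1 = lam 0 r * c 0 r) ->
 (forall i, (i < K)%N -> c i.+1 0 = mu i 0 * c i 0) ->
 (forall i r, ((i + r).+1 < K)%N -> c i.+1 r.+1 = lam i.+1 r * c i.+1 r + mu i r.+1 * c i r.+1) ->
 forall m, (m <= K)%N -> tau m = \sum_(i < m.+1) c i (m - i)%N *: Phi i (m - i)%N.
Proof.
move=> t0 c0 tS PhS PSh l1 l2 cb1 cb2 cin.
elim=> [|m IH] hm.
  by rewrite big_ord_recl big_ord0 /= c0 scale1r addr0.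
have hmK : (m < K)%N by [].
rewrite tS IH; last by apply: ltnW.
rewrite big_distrl /=.
have split : forall i : 'I_m.+1, c i (m - i)%N *: Phi i (m - i)%N * (1 - bb m *: 'X)
   = (c i (m - i)%N * lam i (m - i)%N) *: Phi i (m - i)%N.+1
     + (c i (m - i)%N * mu i (m - i)%N) *: Phi i.+1 (m - i)%N.
  move=> i; have him : (i + (m - i) = m)%N by rewrite subnKC // -ltnS.
  move: him; move Er: (m - i)%N => r him.
  rewrite (PhS i r) (PSh i r) -!scalerA -scalerAl -scalerDr; congr (_ *: _).
  have h1 : lam i r + mu i r = 1 by apply: l1; rewrite him.
  have h2 : lam i r * ee i r + mu i r * ff i r = bb m.
    have h := l2 i r. rewrite him in h. exact: h hmK.
  rewrite !scalerAr -mulrDr; congr (_ * _).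
  by rewrite !scalerBr !scalerA addrACA -scalerDl h1 scale1r -opprD -scalerDl h2.
rewrite (eq_bigr _ (fun i _ => split i)) big_split /=.
rewrite [X in X + _]big_ord_recl [X in _ + X]big_ord_recr /=.
rewrite big_ord_recl big_ord_recr /= -!addrA; congr (_ + _).
  by rewrite !subn0 cb1 // mulrC.
rewrite addrA; congr (_ + _); last first.
  by rewrite subnn /bump /= add1n subnn cb2 // mulrC.
rewrite -big_split /=; apply: eq_bigr => i _.
rewrite /bump /= !add1n.
have hi : (i < m)%N by [].
have e1 : (m - i = (m - i.+1).+1)%N by rewrite subnSK.
rewrite subSS -[in LHS]e1 -scalerDl; congr (_ *: _).
rewrite e1 (cin i (m - i.+1)%N); last by rewrite -addSn subnKC.
by rewrite -e1 mulrC [_ * mu _ _]mulrC.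
Qed.

Lemma qpLp (u s : C) k n : qpoch (u * s ^+ k) s n.+1 = (1 - u * s ^+ k) * qpoch (u * s ^+ k.+1) s n.
Proof. by rewrite qpL exprSr mulrA. Qed.

Lemma qpLi (u q : C) k n : q != 0 ->
  qpoch (u * q^-1 ^+ k.+1) q n.+1 = (1 - u * q^-1 ^+ k.+1) * qpoch (u * q^-1 ^+ k) q n.
Proof. by move=> hq; rewrite qpL exprSr -!mulrA mulVf // mulr1. Qed.

Lemma qpSp (u s : C) k n : qpoch (u * s ^+ k) s n.+1 = qpoch (u * s ^+ k) s n * (1 - u * s ^+ (k + n)).
Proof. by rewrite qpS exprD mulrA. Qed.

Lemma qpDi (u q : C) k n : q != 0 -> 1 - u * q^-1 ^+ k.+1 * q ^+ n != 0 ->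
  qpoch (u * q^-1 ^+ k.+1) q n =
  (1 - u * q^-1 ^+ k.+1) * qpoch (u * q^-1 ^+ k) q n / (1 - u * q^-1 ^+ k.+1 * q ^+ n).
Proof.
move=> hq hn; rewrite -qpLi // qpS mulfK //.
Qed.

Lemma qbinE (q : C) i r : qbinom q (i + r) i = qpoch q q (i + r) / (qpoch q q i * qpoch q q r).
Proof. by rewrite /qbinom addKn. Qed.

Lemma qqS (q : C) n : qpoch q q n.+1 = qpoch q q n * (1 - q ^+ n.+1).
Proof. by rewrite qpS exprS. Qed.

Definition sep (q x y : C) (M : nat) :=
  forall a b : nat, (a <= M)%N -> (b <= M)%N -> x * q ^+ a != y * q ^+ b.
Definition qgen (q : C) (M : nat) := forall a : nat, (0 < a <= M)%N -> q ^+ a != 1.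

Section Sep.
Variables (q : C) (M : nat).
Hypothesis hq : q != 0.

Lemma sepB x y a b : sep q x y M -> (a <= M)%N -> (b <= M)%N -> x * q ^+ a - y * q ^+ b != 0.
Proof. by move=> h ha hb; rewrite subr_eq0 h. Qed.
Lemma sepB1 x y a : sep q x y M -> (a <= M)%N -> x * q ^+ a - y != 0.
Proof. by move=> h ha; have := sepB h ha (leq0n M); rewrite expr0 mulr1. Qed.
Lemma sepB2 x y b : sep q x y M -> (b <= M)%N -> x - y * q ^+ b != 0.
Proof. by move=> h hb; have := sepB h (leq0n M) hb; rewrite expr0 mulr1. Qed.
Lemma sepB0 x y : sep q x y M -> x - y != 0.
Proof. by move=> h; have := sepB h (leq0n M) (leq0n M); rewrite !expr0 !mulr1. Qed.
Lemma qgB a : qgen q M -> (0 < a <= M)%N -> 1 - q ^+ a != 0.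
Proof. by move=> h ha; rewrite subr_eq0 eq_sym h. Qed.
Lemma qgB2 a : qgen q M -> (0 < a <= M)%N -> q ^+ a - 1 != 0.
Proof. by move=> h ha; rewrite subr_eq0 h. Qed.
Lemma sep_sym x y : sep q x y M -> sep q y x M.
Proof. by move=> h a b ha hb; rewrite eq_sym h. Qed.

Lemma qpnz_q x y a n : sep q x y M -> y != 0 -> (a <= M)%N -> (n <= M.+1)%N ->
  qpoch (x / y * q^-1 ^+ a) q n != 0.
Proof.
move=> h hy ha hn; apply: qp_neq0 => t ht.
apply: contra_neq (h t a (leq_trans ht hn) ha) => E.
have hqa : q ^+ a != 0 by rewrite expf_neq0.
have -> : x * q ^+ t = (x / y * q^-1 ^+ a * q ^+ t) * (y * q ^+ a).
  by rewrite exprVn; field; rewrite hy hqa.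
by rewrite E mul1r.
Qed.

Lemma qpnz_q0 x y n : sep q x y M -> y != 0 -> (n <= M.+1)%N -> qpoch (x / y) q n != 0.
Proof. by move=> h hy hn; have := qpnz_q h hy (leq0n M) hn; rewrite expr0 mulr1. Qed.

Lemma qpnz_qq x y a n : sep q x y M -> y != 0 -> (a + n <= M.+1)%N ->
  qpoch (x / y * q ^+ a) q n != 0.
Proof.
move=> h hy hn; apply: qp_neq0 => t ht.
have h1 : (a + t <= M)%N by rewrite -ltnS (leq_trans _ hn) // ltn_add2l.
apply: contra_neq (h (a + t) 0 h1 (leq0n M)) => E.
rewrite expr0 mulr1.
have -> : x * q ^+ (a + t) = (x / y * q ^+ a * q ^+ t) * y.
  by rewrite exprD; field; rewrite hy.
by rewrite E mul1r.
Qed.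

Lemma qpnz_p x y a n : sep q x y M -> y != 0 -> (a + n <= M.+1)%N ->
  qpoch (x / y * q^-1 ^+ a) q^-1 n != 0.
Proof.
move=> h hy hn; apply: qp_neq0 => t ht.
have h1 : (a + t <= M)%N by rewrite -ltnS (leq_trans _ hn) // ltn_add2l.
apply: contra_neq (h 0 (a + t) (leq0n M) h1) => E.
have hqa : q ^+ a != 0 by rewrite expf_neq0.
have hqt : q ^+ t != 0 by rewrite expf_neq0.
rewrite expr0 mulr1.
have -> : x = (x / y * q^-1 ^+ a * q^-1 ^+ t) * (y * q ^+ (a + t)).
  by rewrite !exprVn exprD; field; rewrite hy hqa hqt.
by rewrite E mul1r.
Qed.

Lemma qpnz_p0 x y n : sep q x y M -> y != 0 -> (n <= M.+1)%N -> qpoch (x / y) q^-1 n != 0.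
Proof. by move=> h hy hn; have := @qpnz_p x y 0 n h hy; rewrite expr0 mulr1 add0n; apply. Qed.

Lemma qqnz n : qgen q M -> (n <= M)%N -> qpoch q q n != 0.
Proof.
move=> h hn; apply: qp_neq0 => t ht; rewrite -exprS h //.
by rewrite /= (leq_trans ht hn).
Qed.
Lemma nzfac x y a b : sep q x y M -> y != 0 -> (a <= M)%N -> (b <= M)%N ->
  1 - x / y * q^-1 ^+ a * q ^+ b != 0.
Proof.
move=> h hy ha hb; rewrite subr_eq0 eq_sym.
apply: contra_neq (h b a hb ha) => E.
have hqa : q ^+ a != 0 by rewrite expf_neq0.
have -> : x * q ^+ b = (x / y * q^-1 ^+ a * q ^+ b) * (y * q ^+ a).
  by rewrite exprVn; field; rewrite hy hqa.
by rewrite E mul1r.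
Qed.
End Sep.

Ltac nzsplit := repeat (apply/andP; split).
Ltac nzone :=
  rewrite -?exprD -?exprS -?mulrA -?exprD -?exprS;
  first [ done
        | apply: expf_neq0; done
        | match goal with H : sep _ _ _ _ |- _ => apply: (sepB H); lia end
        | match goal with H : sep _ _ _ _ |- _ => apply: (sepB1 H); lia end
        | match goal with H : sep _ _ _ _ |- _ => apply: (sepB2 H); lia end
        | match goal with H : sep _ _ _ _ |- _ => apply: (sepB0 H) end
        | match goal with H : qgen _ _ |- _ => apply: (qgB H); lia end
        | match goal with H : qgen _ _ |- _ => apply: (qgB2 H); lia end ].
Ltac nzall := nzsplit; nzone.


Definition lamf (f e b : C) : C := (f - b) / (f - e).
Definition muf (f e b : C) : C := (b - e) / (f - e).

Lemma pascal2 K (be ga de q s : C) (c : nat -> nat -> C) :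
  (forall i r, (i + r < K)%N -> ga * q ^+ i != de * s ^+ r) ->
  c 0 0 = 1 ->
  (forall r, (r < K)%N -> c 0 r.+1 = lamf (ga * q ^+ 0) (de * s ^+ r) (be * q^-1 ^+ (0 + r)) * c 0 r) ->
  (forall i, (i < K)%N -> c i.+1 0 = muf (ga * q ^+ i) (de * s ^+ 0) (be * q^-1 ^+ (i + 0)) * c i 0) ->
  (forall i r, ((i + r).+1 < K)%N -> c i.+1 r.+1 =
      lamf (ga * q ^+ i.+1) (de * s ^+ r) (be * q^-1 ^+ (i.+1 + r)) * c i.+1 r
    + muf (ga * q ^+ i) (de * s ^+ r.+1) (be * q^-1 ^+ (i + r.+1)) * c i r.+1) ->
  forall m, (m <= K)%N -> qpochX be q^-1 m =
    \sum_(i < m.+1) c i (m - i)%N *: (qpochX ga q i * qpochX de s (m - i)%N).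
Proof.
move=> hfe c0 cb1 cb2 cin.
apply: (@pascal K (fun i r => qpochX ga q i * qpochX de s r) (qpochX be q^-1) c
  (fun i r => lamf (ga * q ^+ i) (de * s ^+ r) (be * q^-1 ^+ (i + r)))
  (fun i r => muf (ga * q ^+ i) (de * s ^+ r) (be * q^-1 ^+ (i + r)))
  (fun i r => de * s ^+ r) (fun i r => ga * q ^+ i) (fun m => be * q^-1 ^+ m)) => //.
- by rewrite !qpX0 mulr1.
- by move=> m; rewrite qpXS.
- by move=> i r; rewrite qpXS mulrA.
- by move=> i r; rewrite qpXS mulrAC.
- move=> i r hir; rewrite /lamf /muf -mulrDl addrA subrK divff //.
  by rewrite subr_eq0 hfe.
- move=> i r hir; rewrite /lamf /muf.
  have h : ga * q ^+ i - de * s ^+ r != 0 by rewrite subr_eq0 hfe.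
  by field.
Qed.

Definition gco (be ga de q : C) (i r : nat) : C :=
  q^-1 ^+ (i * r) * qbinom q (i + r) i *
  qpoch (be / de * q^-1 ^+ r) q^-1 i * qpoch (be / ga * q^-1 ^+ i) q^-1 r /
  (qpoch (ga / de * q^-1 ^+ r) q i * qpoch (de / ga * q^-1 ^+ i) q r).

Section G.
Variables (be ga de q : C) (M : nat).
Hypotheses (hq : q != 0) (hga : ga != 0) (hde : de != 0)
  (s1 : sep q ga de M) (s2 : sep q de ga M) (qg : qgen q M).

Lemma g_int i r : ((i + r).+2 <= M)%N ->
  gco be ga de q i.+1 r.+1 =
    lamf (ga * q ^+ i.+1) (de * q ^+ r) (be * q^-1 ^+ (i.+1 + r)) * gco be ga de q i.+1 r
  + muf (ga * q ^+ i) (de * q ^+ r.+1) (be * q^-1 ^+ (i + r.+1)) * gco be ga de q i r.+1.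
Proof.
move=> hM.
rewrite /gco !qbinE.
rewrite (qpSp (be/de) q^-1 r.+1 i) (qpLp (be/de) q^-1 r i).
rewrite (qpSp (be/ga) q^-1 i.+1 r) (qpLp (be/ga) q^-1 i r).
rewrite (qpLi (ga/de) r i hq) (qpS (ga/de * q^-1^+r) q i).
rewrite (qpLi (de/ga) i r hq) (qpS (de/ga * q^-1^+i) q r).
rewrite (@qpDi (ga/de) q r i hq); last by apply: nzfac s1 _ _ _ => //; lia.
rewrite (@qpDi (de/ga) q i r hq); last by apply: nzfac s2 _ _ _ => //; lia.
rewrite !addSn !addnS !qqS.
rewrite !mulnS !mulSn.
rewrite /lamf /muf.
have hW : qpoch (ga / de * q^-1 ^+ r) q i != 0 by apply: qpnz_q s1 _ _ _ => //; lia.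
have hV : qpoch (de / ga * q^-1 ^+ i) q r != 0 by apply: qpnz_q s2 _ _ _ => //; lia.
have hQ1 : qpoch q q (i + r) != 0 by apply: qqnz qg _; lia.
have hQ2 : qpoch q q i != 0 by apply: qqnz qg _; lia.
have hQ3 : qpoch q q r != 0 by apply: qqnz qg _; lia.
set X := qpoch (be / de * q^-1 ^+ r.+1) q^-1 i.
set Y := qpoch (be / ga * q^-1 ^+ i.+1) q^-1 r.
set W := qpoch (ga / de * q^-1 ^+ r) q i.
set V := qpoch (de / ga * q^-1 ^+ i) q r.
set Q1 := qpoch q q (i + r).
set Q2 := qpoch q q i.
set Q3 := qpoch q q r.
rewrite !exprVn !exprS !exprD.
field; nzall.
Qed.

Lemma g_b1 r : (r.+1 <= M)%N ->
  gco be ga de q 0 r.+1 = lamf (ga * q ^+ 0) (de * q ^+ r) (be * q^-1 ^+ (0 + r)) * gco be ga de q 0 r.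
Proof.
move=> hM; rewrite /gco !qbinE !add0n !mul0n !expr0 !mulr1 !qp0 !mul1r.
rewrite (qpS (be/ga) q^-1 r) (qpS (de/ga) q r) qqS /lamf !mulr1.
have hV : qpoch (de / ga) q r != 0 by apply: qpnz_q0 s2 _ _ => //; lia.
have hQ : qpoch q q r != 0 by apply: qqnz qg _; lia.
set V := qpoch (de / ga) q r. set Y := qpoch (be / ga) q^-1 r. set Q := qpoch q q r.
rewrite !exprVn.
field; nzall.
Qed.

Lemma g_b2 i : (i.+1 <= M)%N ->
  gco be ga de q i.+1 0 = muf (ga * q ^+ i) (de * q ^+ 0) (be * q^-1 ^+ (i + 0)) * gco be ga de q i 0.
Proof.
move=> hM; rewrite /gco !qbinE !addn0 !muln0 !expr0 !mulr1 !qp0 !mul1r.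
rewrite (qpS (be/de) q^-1 i) (qpS (ga/de) q i) qqS /muf !mulr1.
have hV : qpoch (ga / de) q i != 0 by apply: qpnz_q0 s1 _ _ => //; lia.
have hQ : qpoch q q i != 0 by apply: qqnz qg _; lia.
set V := qpoch (ga / de) q i. set Y := qpoch (be / de) q^-1 i. set Q := qpoch q q i.
rewrite !exprVn.
field; nzall.
Qed.

Lemma gexp m : (m.+1 <= M)%N -> qpochX be q^-1 m =
    \sum_(i < m.+1) gco be ga de q i (m - i)%N *: (qpochX ga q i * qpochX de q (m - i)%N).
Proof.
move=> hm; apply: (@pascal2 m) => //.
- by move=> i r hir; apply: s1; lia.
- by rewrite /gco /qbinom !qp0 expr0; field.
- by move=> r hr; apply: g_b1; lia.
- by move=> i hi; apply: g_b2; lia.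
- by move=> i r hir; apply: g_int; lia.
Qed.
End G.

Definition sco (be ga ep q : C) (i r : nat) : C :=
  qbinom q (i + r) i * qpoch (be / ep) q^-1 i * qpoch (be / ga * q^-1 ^+ i) q^-1 r /
  (qpoch (ga / ep * q ^+ r) q i * qpoch (ep / ga) q^-1 r).

Section S.
Variables (be ga ep q : C) (M : nat).
Hypotheses (hq : q != 0) (hga : ga != 0) (hep : ep != 0)
  (s1 : sep q ga ep M) (s2 : sep q ep ga M) (qg : qgen q M).

Lemma s_int i r : ((i + r).+2 <= M)%N ->
  sco be ga ep q i.+1 r.+1 =
    lamf (ga * q ^+ i.+1) (ep * q^-1 ^+ r) (be * q^-1 ^+ (i.+1 + r)) * sco be ga ep q i.+1 r
  + muf (ga * q ^+ i) (ep * q^-1 ^+ r.+1) (be * q^-1 ^+ (i + r.+1)) * sco be ga ep q i r.+1.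
Proof.
move=> hM.
rewrite /sco !qbinE.
rewrite (qpS (be/ep) q^-1 i).
rewrite (qpSp (be/ga) q^-1 i.+1 r) (qpLp (be/ga) q^-1 i r).
rewrite (qpSp (ga/ep) q r.+1 i) (qpLp (ga/ep) q r i).
rewrite (qpS (ep/ga) q^-1 r).
rewrite !addSn !addnS !qqS.
rewrite /lamf /muf.
have hZ : qpoch (ga / ep * q ^+ r.+1) q i != 0 by apply: qpnz_qq s1 _ _ => //; lia.
have hV : qpoch (ep / ga) q^-1 r != 0 by apply: qpnz_p0 s2 _ _ => //; lia.
have hQ1 : qpoch q q (i + r) != 0 by apply: qqnz qg _; lia.
have hQ2 : qpoch q q i != 0 by apply: qqnz qg _; lia.
have hQ3 : qpoch q q r != 0 by apply: qqnz qg _; lia.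
set X := qpoch (be / ep) q^-1 i.
set Y := qpoch (be / ga * q^-1 ^+ i.+1) q^-1 r.
set Z := qpoch (ga / ep * q ^+ r.+1) q i.
set V := qpoch (ep / ga) q^-1 r.
set Q1 := qpoch q q (i + r).
set Q2 := qpoch q q i.
set Q3 := qpoch q q r.
rewrite !exprVn !exprS !exprD.
field; nzall.
Qed.

Lemma s_b1 r : (r.+1 <= M)%N ->
  sco be ga ep q 0 r.+1 = lamf (ga * q ^+ 0) (ep * q^-1 ^+ r) (be * q^-1 ^+ (0 + r)) * sco be ga ep q 0 r.
Proof.
move=> hM; rewrite /sco !qbinE !add0n !expr0 !mulr1 !qp0 ?mul1r.
rewrite (qpS (be/ga) q^-1 r) (qpS (ep/ga) q^-1 r) qqS /lamf !mulr1.
have hV : qpoch (ep / ga) q^-1 r != 0 by apply: qpnz_p0 s2 _ _ => //; lia.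
have hQ : qpoch q q r != 0 by apply: qqnz qg _; lia.
set V := qpoch (ep / ga) q^-1 r. set Y := qpoch (be / ga) q^-1 r. set Q := qpoch q q r.
rewrite !exprVn.
field; nzall.
Qed.

Lemma s_b2 i : (i.+1 <= M)%N ->
  sco be ga ep q i.+1 0 = muf (ga * q ^+ i) (ep * q^-1 ^+ 0) (be * q^-1 ^+ (i + 0)) * sco be ga ep q i 0.
Proof.
move=> hM; rewrite /sco !qbinE !addn0 !expr0 !mulr1 !qp0 ?mul1r.
rewrite (qpS (be/ep) q^-1 i) (qpS (ga/ep) q i) qqS /muf !mulr1.
have hV : qpoch (ga / ep) q i != 0 by apply: qpnz_q0 s1 _ _ => //; lia.
have hQ : qpoch q q i != 0 by apply: qqnz qg _; lia.
set V := qpoch (ga / ep) q i. set Y := qpoch (be / ep) q^-1 i. set Q := qpoch q q i.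
rewrite !exprVn.
field; nzall.
Qed.
Lemma sexp m : (m.+1 <= M)%N -> qpochX be q^-1 m =
    \sum_(i < m.+1) sco be ga ep q i (m - i)%N *: (qpochX ga q i * qpochX ep q^-1 (m - i)%N).
Proof.
move=> hm; apply: (@pascal2 m) => //.
- move=> i r hir.
  have hh : ga * q ^+ (i + r) != ep * q ^+ 0 by apply: s1; lia.
  apply: contra_neq hh => E.
  rewrite expr0 mulr1 exprD mulrA E -mulrA exprVn mulVf ?mulr1 //.
  by rewrite expf_neq0.
- by rewrite /sco /qbinom !qp0; field.
- by move=> r hr; apply: s_b1; lia.
- by move=> i hi; apply: s_b2; lia.
- by move=> i r hir; apply: s_int; lia.
Qed.
End S.

Lemma reidx (V : zmodType) (f : nat -> V) j N : (j <= N)%N ->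
  \sum_(i < (N - j).+1) f (j + i)%N = \sum_(l < N.+1) (if (j <= l)%N then f l else 0).
Proof.
move=> hj; rewrite -big_mkcond /=.
have -> : \sum_(l < N.+1 | (j <= l)%N) f l = \sum_(j <= l < N.+1) f l.
  by rewrite big_geq_mkord.
have h := big_addn 0 N.+1 j predT f; rewrite add0n in h.
rewrite h big_mkord subSn //.
by apply: eq_bigr => i _; rewrite addnC.
Qed.

Lemma widen (V : zmodType) (f : nat -> V) k N : (k <= N)%N ->
  \sum_(j < k.+1) f j = \sum_(j < N.+1) (if (j <= k)%N then f j else 0).
Proof.
move=> hk; rewrite -big_mkcond /= (big_ord_widen _ (fun j => f j) (_ : k.+1 <= N.+1)%N) //.
Qed.

Lemma sep_mon q x y M M' : sep q x y M -> (M' <= M)%N -> sep q x y M'.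
Proof. by move=> h hM a b ha hb; apply: h; lia. Qed.
Lemma qgen_mon q M M' : qgen q M -> (M' <= M)%N -> qgen q M'.
Proof. by move=> h hM a ha; apply: h; lia. Qed.
Lemma sepMq q x y e M : sep q x y (M + e) -> sep q (x * q ^+ e) y M.
Proof. by move=> h a b ha hb; rewrite -mulrA -exprD; apply: h; lia. Qed.
Lemma sepMq' q x y e M : sep q x y (M + e) -> sep q x (y * q ^+ e) M.
Proof. by move=> h a b ha hb; rewrite -[y * _ * _]mulrA -exprD; apply: h; lia. Qed.
Lemma sepMp q x y e M : q != 0 -> sep q x y (M + e) -> sep q x (y * q^-1 ^+ e) M.
Proof.
move=> hq h a b ha hb; have hh : x * q ^+ (a + e) != y * q ^+ b by apply: h; lia.
apply: contra_neq hh => E; rewrite exprD mulrA E exprVn.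
have he : q ^+ e != 0 by rewrite expf_neq0.
by field.
Qed.
Lemma sepMp' q x y e M : q != 0 -> sep q x y (M + e) -> sep q (x * q^-1 ^+ e) y M.
Proof. by move=> hq h; apply: sep_sym; apply: sepMp => //; apply: sep_sym. Qed.

Section Compose.
Variables (a b c d q : C) (N : nat).
Hypotheses (hq : q != 0) (ha : a != 0) (hb : b != 0) (hc : c != 0) (hd : d != 0)
  (qg : qgen q (4 * N + 4))
  (scb : sep q c b (4 * N + 4)) (sbc : sep q b c (4 * N + 4))
  (scd : sep q c d (4 * N + 4)) (sdc : sep q d c (4 * N + 4)).

Definition Fb l := qpochX c q l * qpochX d q (N - l).
Definition Acf k j := sco a c (b * q^-1 ^+ (N - k)) q j (k - j).
Definition Bcf j l := gco b (c * q ^+ j) d q (l - j) (N - l).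

Lemma stepB j : (j <= N)%N ->
  qpochX c q j * qpochX b q^-1 (N - j) =
  \sum_(l < N.+1) (if (j <= l)%N then Bcf j l *: Fb l else 0).
Proof.
move=> hj.
have hcj : c * q ^+ j != 0 by rewrite mulf_neq0 // expf_neq0.
rewrite (@gexp b (c * q ^+ j) d q (N - j).+1 hq hcj hd); first last.
- by [].
- by apply: qgen_mon qg _; lia.
- by apply: sepMq'; apply: sep_mon sdc _; lia.
- by apply: sepMq; apply: sep_mon scd _; lia.
rewrite big_distrr /= -(reidx (fun l => Bcf j l *: Fb l) hj).
apply: eq_bigr => i _; rewrite -scalerAr mulrA -qpXD /Bcf /Fb addKn subnDA.
by [].
Qed.

Lemma compose k : (k <= N)%N ->
  qpochX a q^-1 k * qpochX b q^-1 (N - k) =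
  \sum_(l < N.+1) (\sum_(j < N.+1) (if ((j <= k) && (j <= l))%N then Acf k j * Bcf j l else 0)) *: Fb l.
Proof.
move=> hk.
have hep : b * q^-1 ^+ (N - k) != 0 by rewrite mulf_neq0 // expf_neq0 // invr_neq0.
rewrite (@sexp a c (b * q^-1 ^+ (N - k)) q k.+1 hq hc hep); first last.
- by [].
- by apply: qgen_mon qg _; lia.
- by apply: sepMp' => //; apply: sep_mon sbc _; lia.
- by apply: sepMp => //; apply: sep_mon scb _; lia.
rewrite big_distrl /=.
transitivity (\sum_(j < k.+1) Acf k j *: (qpochX c q j * qpochX b q^-1 (N - j))).
  apply: eq_bigr => j _; rewrite -scalerAl -mulrA [qpochX (b * _) _ _ * _]mulrC -qpXD.
  have -> : (N - k + (k - j) = N - j)%N by have := ltn_ord j; lia.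
  by [].
rewrite (widen (fun j => Acf k j *: (qpochX c q j * qpochX b q^-1 (N - j))) hk).
transitivity (\sum_(j < N.+1) \sum_(l < N.+1)
   (if ((j <= k) && (j <= l))%N then Acf k j * Bcf j l else 0) *: Fb l).
  apply: eq_bigr => j _; case: ifP => hjk; last first.
    by rewrite big1 // => l _; rewrite scale0r.
  rewrite stepB; last by have := ltn_ord j; lia.
  rewrite scaler_sumr; apply: eq_bigr => l _; case: ifP => hjl.
    by rewrite scalerA.
  by rewrite scaler0 scale0r.
rewrite exchange_big /=; apply: eq_bigr => l _.
by rewrite scaler_suml.
Qed.
End Compose.

Section Ratios.
Variables (q : C) (M : nat).
Hypotheses (hq : q != 0) (qg : qgen q M).

Lemma sco_ratio be ga ep j r1 : ga != 0 -> ep != 0 ->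
  sep q ga ep M -> sep q ep ga M -> sep q be ga M -> sep q ga be M -> ((j + r1).+2 <= M)%N ->
  sco be ga ep q j.+1 r1 = sco be ga ep q j r1.+1 *
   ((1 - q ^+ r1.+1) / (1 - q ^+ j.+1) * (1 - be / ep * q^-1 ^+ j) /
    ((1 - be / ga * q^-1 ^+ j) * (1 - ga / ep * q ^+ r1)) * (1 - ep / ga * q^-1 ^+ r1)).
Proof.
move=> hga hep s1 s2 s3 s4 hM.
rewrite /sco !qbinE.
rewrite (qpS (be/ep) q^-1 j).
rewrite (qpLp (be/ga) q^-1 j r1).
rewrite (qpLp (ga/ep) q r1 j).
rewrite (qpS (ep/ga) q^-1 r1).
rewrite !addSn !addnS !qqS.
have hZ : qpoch (ga / ep * q ^+ r1.+1) q j != 0 by apply: qpnz_qq s1 _ _ => //; lia.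
have hV : qpoch (ep / ga) q^-1 r1 != 0 by apply: qpnz_p0 s2 _ _ => //; lia.
have hQ1 : qpoch q q (j + r1) != 0 by apply: qqnz qg _; lia.
have hQ2 : qpoch q q j != 0 by apply: qqnz qg _; lia.
have hQ3 : qpoch q q r1 != 0 by apply: qqnz qg _; lia.
have hY : 1 - be / ga * q^-1 ^+ j != 0.
  by have := nzfac hq s3 hga (_ : j <= M)%N (leq0n M); rewrite expr0 mulr1; apply; lia.
set X := qpoch (be / ep) q^-1 j.
set Y := qpoch (be / ga * q^-1 ^+ j.+1) q^-1 r1.
set Z := qpoch (ga / ep * q ^+ r1.+1) q j.
set V := qpoch (ep / ga) q^-1 r1.
set Q1 := qpoch q q (j + r1).
set Q2 := qpoch q q j.
set Q3 := qpoch q q r1.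
move: hY; rewrite !exprVn !exprS => hY.
field; nzall.
Qed.
Lemma gco_ratio be ga de j r2 r3 : ga != 0 -> de != 0 ->
  sep q ga de M -> sep q de ga M -> sep q be de M -> sep q de be M ->
  ((j + r2 + r3).+2 <= M)%N ->
  gco be (ga * q ^+ j.+1) de q r2 r3 = gco be (ga * q ^+ j) de q r2.+1 r3 *
   (q ^+ r3 * (1 - q ^+ r2.+1) / (1 - q ^+ (r2 + r3).+1) *
    (1 - ga * q ^+ j / de * q^-1 ^+ r3) / (1 - be / de * q^-1 ^+ (r3 + r2))).
Proof.
move=> hga hde s1 s2 s3 s4 hM.
have hgj : ga * q ^+ j != 0 by rewrite mulf_neq0 // expf_neq0.
have E1 : be / (ga * q ^+ j.+1) * q^-1 ^+ r2 = be / (ga * q ^+ j) * q^-1 ^+ r2.+1.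
  by rewrite !exprVn !exprS; field; nzall.
have E2 : de / (ga * q ^+ j.+1) * q^-1 ^+ r2 = de / (ga * q ^+ j) * q^-1 ^+ r2.+1.
  by rewrite !exprVn !exprS; field; nzall.
have E3 : ga * q ^+ j.+1 / de * q^-1 ^+ r3 = ga * q ^+ j / de * q^-1 ^+ r3 * q.
  by rewrite !exprS; field.
rewrite /gco !qbinE E1 E2 E3.
rewrite (qpSp (be/de) q^-1 r3 r2).
rewrite (qpL (ga * q ^+ j / de * q^-1 ^+ r3) q r2).
rewrite !addSn !qqS.
have hW : qpoch (ga * q ^+ j / de * q^-1 ^+ r3 * q) q r2 != 0.
  rewrite -E3.
  have s1' : sep q (ga * q ^+ j.+1) de (r2 + r3).+1 by apply: sepMq; apply: sep_mon s1 _; lia.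
  by apply: qpnz_q s1' hde _ _ => //; lia.
have hV : qpoch (de / (ga * q ^+ j) * q^-1 ^+ r2.+1) q r3 != 0.
  have s2' : sep q de (ga * q ^+ j) (r2 + r3).+1 by apply: sepMq'; apply: sep_mon s2 _; lia.
  by apply: qpnz_q s2' hgj _ _ => //; lia.
have hQ1 : qpoch q q (r2 + r3) != 0 by apply: qqnz qg _; lia.
have hQ2 : qpoch q q r2 != 0 by apply: qqnz qg _; lia.
have hQ3 : qpoch q q r3 != 0 by apply: qqnz qg _; lia.
have hB : 1 - be / de * q^-1 ^+ (r3 + r2) != 0.
  by have := nzfac hq s3 hde (_ : r3 + r2 <= M)%N (leq0n M); rewrite expr0 mulr1; apply; lia.
set X := qpoch (be / de * q^-1 ^+ r3) q^-1 r2.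
set Y := qpoch (be / (ga * q ^+ j) * q^-1 ^+ r2.+1) q^-1 r3.
set W := qpoch (ga * q ^+ j / de * q^-1 ^+ r3 * q) q r2.
set V := qpoch (de / (ga * q ^+ j) * q^-1 ^+ r2.+1) q r3.
set Q1 := qpoch q q (r2 + r3).
set Q2 := qpoch q q r2.
set Q3 := qpoch q q r3.
move: hB; rewrite !mulSn !exprVn !exprS !exprD => hB.
field; nzall.
Qed.
End Ratios.

Definition T7 (a1 a2 a3 a4 b1 b2 b3 q : C) (j : nat) : C :=
  (qpoch a1 q j * qpoch a2 q j * qpoch a3 q j * qpoch a4 q j) /
  (qpoch q q j * qpoch b1 q j * qpoch b2 q j * qpoch b3 q j) * q ^+ j.

Lemma T7S a1 a2 a3 a4 b1 b2 b3 q j :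
  T7 a1 a2 a3 a4 b1 b2 b3 q j.+1 = T7 a1 a2 a3 a4 b1 b2 b3 q j *
  ((1 - a1 * q ^+ j) * (1 - a2 * q ^+ j) * (1 - a3 * q ^+ j) * (1 - a4 * q ^+ j) * q /
   ((1 - q * q ^+ j) * (1 - b1 * q ^+ j) * (1 - b2 * q ^+ j) * (1 - b3 * q ^+ j))).
Proof.
rewrite /T7 !qpS exprSr !invfM; ring.
Qed.

Lemma zN (q : C) n : q ^ (- n%:Z) = (q ^+ n)^-1.
Proof. by rewrite -exprnN. Qed.
Lemma zB (q : C) m n : q != 0 -> q ^ (m%:Z - n%:Z) = q ^+ m / q ^+ n.
Proof. by move=> hq; rewrite expfzDr // -exprnN. Qed.
Lemma z1 (q : C) n : q != 0 -> q ^ (1 - n%:Z) = q / q ^+ n.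
Proof. by move=> hq; rewrite expfzDr // -exprnN expr1z. Qed.

Lemma rho_id (a b c d q : C) M j r1 r2 r3 r4 : q != 0 -> a != 0 -> b != 0 -> c != 0 -> d != 0 ->
  qgen q M -> sep q d b M -> sep q b c M -> sep q c a M -> sep q a c M ->
  ((j + r1 + r2 + r3 + r4).+2 <= M)%N ->
  (r2 + r3 = r1 + r4)%N ->
  (1 - q ^ (- (j.+1 + r1)%N%:Z) * q ^+ j) * (1 - q ^ (- (j.+1 + r2)%N%:Z) * q ^+ j) *
  (1 - q ^ ((j.+1 + r1)%N%:Z - (j.+1 + r1 + r4)%N%:Z) * b / a * q ^+ j) *
  (1 - q ^ ((j.+1 + r2)%N%:Z - (j.+1 + r1 + r4)%N%:Z) * c / d * q ^+ j) * q /
  ((1 - q * q ^+ j) * (1 - q ^ (- (j.+1 + r1 + r4)%N%:Z) * q ^+ j) * (1 - c / a * q ^+ j) *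
   (1 - q ^ (1 - (j.+1 + r1 + r4)%N%:Z) * b / d * q ^+ j))
 =
  ((1 - q ^+ r1.+1) / (1 - q ^+ j.+1) * (1 - a / (b * q^-1 ^+ r4) * q^-1 ^+ j) /
    ((1 - a / c * q^-1 ^+ j) * (1 - c / (b * q^-1 ^+ r4) * q ^+ r1)) *
    (1 - (b * q^-1 ^+ r4) / c * q^-1 ^+ r1)) *
  (q ^+ r3 * (1 - q ^+ r2.+1) / (1 - q ^+ (r2 + r3).+1) *
    (1 - c * q ^+ j / d * q^-1 ^+ r3) / (1 - b / d * q^-1 ^+ (r3 + r2))).
Proof.
move=> hq ha hb hc hd qg s1 s2 s3 s4 hM hr.
rewrite !zN !zB // ?z1 // ?expr1.
have hr2 : q ^+ r2 != 0 by rewrite expf_neq0.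
have E3 : q ^+ r3 = q ^+ r1 * q ^+ r4 / q ^+ r2.
  by rewrite -exprD -hr exprD; field.
have E23 : q ^+ (r2 + r3).+1 = q * q ^+ r1 * q ^+ r4.
  by rewrite hr exprS exprD mulrA.
have E32 : q^-1 ^+ (r3 + r2) = (q ^+ r1 * q ^+ r4)^-1.
  by rewrite exprVn addnC hr exprD.
rewrite E23 E32 !exprVn E3.
rewrite !exprS !exprD.
field; nzall.
Qed.

Definition pref (N : nat) (a b c d q : C) (k l : nat) : C :=
  q ^ (l%:Z * (l%:Z - N%:Z)) * qbinom q N l *
  ((qpoch (q ^ (1 - N%:Z) * b / d) q l *
    qpoch (q ^ (1 - N%:Z) * b / c) q (N - l) *
    qpoch (q ^ (1 - k%:Z) * a / c) q k) /
   (qpoch (q ^ (l%:Z - N%:Z) * c / d) q l *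
    qpoch (q ^ (- l%:Z) * d / c) q (N - l) *
    qpoch (q ^ (1 - N%:Z) * b / c) q k)).

Definition TT (N : nat) (a b c d q : C) (k l j : nat) : C :=
  T7 (q ^ (- k%:Z)) (q ^ (- l%:Z)) (q ^ (k%:Z - N%:Z) * b / a)
     (q ^ (l%:Z - N%:Z) * c / d) (q ^ (- N%:Z)) (c / a) (q ^ (1 - N%:Z) * b / d) q j.

Lemma CcoefE N a b c d q k l :
  Ccoef N a b c d q k l = \sum_(j < N.+1) pref N a b c d q k l * TT N a b c d q k l j.
Proof. by rewrite /Ccoef /phi43 mulr_sumr. Qed.

Lemma qrev (u q : C) s n : q != 0 ->
  qpoch (u * q ^ (1 - (s + n)%N%:Z)) q n = qpoch (u * q^-1 ^+ s) q^-1 n.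
Proof.
move=> hq; rewrite /qpoch (reindex_inj rev_ord_inj) /=; apply: eq_bigr => t _.
congr (1 - _); rewrite z1 // !exprVn.
have ht := ltn_ord t.
have -> : (s + n = s + (n - t.+1) + t.+1)%N by lia.
rewrite !exprD !exprS; field; nzall.
Qed.

Lemma base N a b c d q k l : q != 0 -> c != 0 -> d != 0 -> qpoch q q k != 0 -> (k <= N)%N -> (l <= N)%N ->
  pref N a b c d q k l = Acf a b c q N k 0 * Bcf b c d q N 0 l.
Proof.
move=> hq hc hd hQk hk hl.
rewrite /pref /Acf /Bcf /sco /gco !subn0 expr0 !mulr1 !add0n !qp0 !mul1r !mulr1.
have R1 : qpoch (q ^ (1 - N%:Z) * b / d) q l = qpoch (b / d * q^-1 ^+ (N - l)) q^-1 l.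
  rewrite -qrev // subnK //; congr qpoch; set zz := q ^ _; ring.
have R2 : qpoch (q ^ (1 - N%:Z) * b / c) q (N - l) = qpoch (b / c * q^-1 ^+ l) q^-1 (N - l).
  rewrite -qrev // subnKC //; congr qpoch; set zz := q ^ _; ring.
have R3 : qpoch (q ^ (1 - k%:Z) * a / c) q k = qpoch (a / c) q^-1 k.
  have := qrev (a / c) 0 k hq; rewrite add0n expr0 mulr1 => <-; congr qpoch; set zz := q ^ _; ring.
have R4 : qpoch (q ^ (1 - N%:Z) * b / c) q k = qpoch (b * q^-1 ^+ (N - k) / c) q^-1 k.
  rewrite (_ : b * q^-1 ^+ (N - k) / c = b / c * q^-1 ^+ (N - k)); last by ring.
  rewrite -qrev // subnK //; congr qpoch; set zz := q ^ _; ring.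
have R5 : qpoch (q ^ (l%:Z - N%:Z) * c / d) q l = qpoch (c / d * q^-1 ^+ (N - l)) q l.
  congr qpoch; rewrite zB // exprVn.
  have -> : (N = l + (N - l))%N by lia.
  rewrite addKn exprD; field; nzall.
have R6 : qpoch (q ^ (- l%:Z) * d / c) q (N - l) = qpoch (d / c * q^-1 ^+ l) q (N - l).
  by congr qpoch; rewrite zN exprVn; ring.
have R7 : q ^ (l%:Z * (l%:Z - N%:Z)) = q^-1 ^+ (l * (N - l)).
  rewrite exprVn exprnN; congr (q ^ _).
  have -> : (N = l + (N - l))%N by lia.
  rewrite addKn; set X := (N - l)%N; rewrite !PoszD !PoszM; lia.
have R8 : qbinom q N l = qbinom q (l + (N - l)) l by rewrite subnKC.
rewrite R1 R2 R3 R4 R5 R6 R7 R8 /qbinom addKn subn0 qp0 mul1r ?invr1 mulfV // ?mul1r.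
rewrite !invfM; ring.
Qed.

Record gen (N : nat) (a b c d q : C) : Prop := Gen {
  g_q : q != 0; g_a : a != 0; g_b : b != 0; g_c : c != 0; g_d : d != 0;
  g_qg : qgen q (4 * N + 4);
  s_ab : sep q a b (4 * N + 4); s_ba : sep q b a (4 * N + 4);
  s_ac : sep q a c (4 * N + 4); s_ca : sep q c a (4 * N + 4);
  s_ad : sep q a d (4 * N + 4); s_da : sep q d a (4 * N + 4);
  s_bc : sep q b c (4 * N + 4); s_cb : sep q c b (4 * N + 4);
  s_bd : sep q b d (4 * N + 4); s_db : sep q d b (4 * N + 4);
  s_cd : sep q c d (4 * N + 4); s_dc : sep q d c (4 * N + 4) }.

Lemma qp_eq0 (u q : C) t n : (t < n)%N -> u * q ^+ t = 1 -> qpoch u q n = 0.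
Proof.
move=> ht hu; rewrite /qpoch (bigD1 (Ordinal ht)) //= hu subrr mul0r //.
Qed.

Section Term.
Variables (N : nat) (a b c d q : C).
Hypothesis G : gen N a b c d q.
Let hq := g_q G. Let ha := g_a G. Let hb := g_b G. Let hc := g_c G. Let hd := g_d G.
Let qg := g_qg G.

Lemma term_eq k l j : (k <= N)%N -> (l <= N)%N -> (j <= N)%N ->
  pref N a b c d q k l * TT N a b c d q k l j =
  if ((j <= k) && (j <= l))%N then Acf a b c q N k j * Bcf b c d q N j l else 0.
Proof.
move=> hk hl hj; case: ifP => h; last first.
  have hz : TT N a b c d q k l j = 0.
    rewrite /TT /T7; case/nandP: h; rewrite -ltnNge => h.
      by rewrite (@qp_eq0 _ _ k) // ?mul0r // zN mulVf // expf_neq0.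
    by rewrite (@qp_eq0 (q ^ (- l%:Z)) _ l) // ?mulr0 ?mul0r // zN mulVf // expf_neq0.
  by rewrite hz mulr0.
case/andP: h; elim: j hj => [|j IH] hj hjk hjl.
  rewrite /TT /T7 !qp0 expr0 !mulr1 invr1 mulr1.
  rewrite mulr1; apply: base => //; apply: qqnz qg _; lia.
have IH' := IH (ltnW hj) (ltnW hjk) (ltnW hjl).
rewrite {1}/TT T7S -/(TT N a b c d q k l j) mulrA IH'.
set r1 := (k - j.+1)%N. set r2 := (l - j.+1)%N. set r3 := (N - l)%N. set r4 := (N - k)%N.
have hk1 : k = (j.+1 + r1)%N by rewrite /r1; lia.
have hl1 : l = (j.+1 + r2)%N by rewrite /r2; lia.
have hN1 : N = (j.+1 + r1 + r4)%N by rewrite /r1 /r4; lia.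
have hr : (r2 + r3 = r1 + r4)%N by rewrite /r1 /r2 /r3 /r4; lia.
have e1 : (k - j = r1.+1)%N by rewrite /r1; lia.
have e2 : (l - j = r2.+1)%N by rewrite /r2; lia.
rewrite /Acf /Bcf -/r1 -/r2 -/r3 -/r4 e1 e2.
have hM : ((j + r1 + r2 + r3 + r4).+2 <= 4 * N + 4)%N by rewrite /r1 /r2 /r3 /r4; lia.
have hep : b * q^-1 ^+ r4 != 0 by rewrite mulf_neq0 // expf_neq0 // invr_neq0.
rewrite (@sco_ratio q (4 * N + 4 - r4) hq); first last.
- lia.
- by apply: sep_mon (s_ca G) _; lia.
- by apply: sep_mon (s_ac G) _; lia.
- by apply: sepMp' => //; apply: sep_mon (s_bc G) _; lia.
- by apply: sepMp => //; apply: sep_mon (s_cb G) _; lia.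
- by [].
- by [].
- by apply: qgen_mon qg _; lia.
rewrite (@gco_ratio q (4 * N + 4) hq qg) //; first last.
- lia.
- exact: s_db G.
- exact: s_bd G.
- exact: s_dc G.
- exact: s_cd G.
rewrite hk1 hl1 hN1.
rewrite (@rho_id a b c d q (4 * N + 4) j r1 r2 r3 r4) //; first last.
- exact: s_ac G.
- exact: s_ca G.
- exact: s_bc G.
- exact: s_db G.
ring.
Qed.

Lemma Ccoef_sum k l : (k <= N)%N -> (l <= N)%N ->
  Ccoef N a b c d q k l =
  \sum_(j < N.+1) (if ((j <= k) && (j <= l))%N then Acf a b c q N k j * Bcf b c d q N j l else 0).
Proof.
move=> hk hl; rewrite CcoefE; apply: eq_bigr => j _; apply: term_eq => //.
by have := ltn_ord j; lia.
Qed.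
End Term.

Lemma hornerQ (u s x : C) n : (qpochX u s n).[x] = qpoch (u * x) s n.
Proof.
rewrite /qpochX /qpoch horner_prod; apply: eq_bigr => t _.
by rewrite hornerD hornerN hornerZ hornerX hornerC mulrAC.
Qed.

Section Uniq.
Variables (N : nat) (a b c d q : C).
Hypothesis G : gen N a b c d q.
Let hq := g_q G. Let hc := g_c G. Let hd := g_d G. Let qg := g_qg G.

Lemma Fb_eval0 s l : (s < l)%N -> (Fb c d q N l).[(c * q ^+ s)^-1] = 0.
Proof.
move=> hsl; rewrite /Fb hornerM hornerQ (@qp_eq0 _ _ s) ?mul0r //.
have hqs : q ^+ s != 0 by rewrite expf_neq0.
by field; nzall.
Qed.

Lemma Fb_eval1 s : (s <= N)%N -> (Fb c d q N s).[(c * q ^+ s)^-1] != 0.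
Proof.
move=> hs; rewrite /Fb hornerM !hornerQ mulf_neq0 //.
  apply: qp_neq0 => t ht.
  have h1 : q ^+ (s - t) != 1 by apply: qg; lia.
  apply: contra_neq h1 => E.
  have hqt : q ^+ t != 0 by rewrite expf_neq0.
  have -> : q ^+ (s - t) = (c * (c * q ^+ s)^-1 * q ^+ t)^-1.
    have -> : (s = (s - t) + t)%N by lia.
    rewrite addnK exprD; field; nzall.
  by rewrite E invr1.
have -> : d * (c * q ^+ s)^-1 = d / c * q^-1 ^+ s.
  by rewrite exprVn; field; nzall.
apply: qpnz_q (s_dc G) hc _ _; lia.
Qed.

Lemma uniq_coef (D E : nat -> C) :
  \sum_(l < N.+1) D l *: Fb c d q N l = \sum_(l < N.+1) E l *: Fb c d q N l ->
  forall l, (l <= N)%N -> D l = E l.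
Proof.
move=> H.
have H0 : \sum_(l < N.+1) (D l - E l) *: Fb c d q N l = 0.
  by rewrite (eq_bigr (fun l : 'I_N.+1 => D l *: Fb c d q N l - E l *: Fb c d q N l))
       ?sumrB ?H ?subrr // => l _; rewrite scalerBl.
suff : forall s, (s <= N)%N -> forall l, (l <= s)%N -> D l - E l = 0.
  by move=> h l hl; apply/eqP; rewrite -subr_eq0; apply/eqP; apply: (h l).
elim=> [|s IH] hs l hl.
- have := congr1 (fun p => p.[(c * q ^+ 0)^-1]) H0; rewrite horner_sum hornerC /=.
  rewrite big_ord_recl /= big1 ?addr0; last first.
    by move=> i _; rewrite hornerZ Fb_eval0 ?mulr0.
  rewrite hornerZ => /eqP; rewrite mulf_eq0 (negPf (Fb_eval1 (leq0n N))) orbF.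
  by move/eqP; have -> : l = 0%N by lia.
- case: (ltnP l s.+1) => hls; first by apply: IH => //; lia.
  have -> : l = s.+1 by lia.
  have := congr1 (fun p => p.[(c * q ^+ s.+1)^-1]) H0; rewrite horner_sum hornerC /=.
  rewrite (bigD1 (Ordinal (hs : s.+1 < N.+1)%N)) //= big1 ?addr0; last first.
    move=> i hi; rewrite hornerZ.
    case: (ltnP s.+1 i) => hsi; first by rewrite Fb_eval0 ?mulr0.
    have hi' : (i < s.+1)%N.
      rewrite ltn_neqAle hsi andbT; apply: contra hi => /eqP e.
      by apply/eqP; apply: val_inj.
    by rewrite IH ?mul0r //; lia.
  rewrite hornerZ => /eqP; rewrite mulf_eq0 (negPf (Fb_eval1 hs)) orbF.
  by move/eqP.
Qed.

Lemma main_gen k : (k <= N)%N ->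
  expansion N a b c d q k (Ccoef N a b c d q k) /\
  (forall D : nat -> C, expansion N a b c d q k D ->
     forall l : nat, (l <= N)%N -> D l = Ccoef N a b c d q k l).
Proof.
move=> hk.
have EX : expansion N a b c d q k (Ccoef N a b c d q k).
  rewrite /expansion (compose (g_q G) (g_a G) (g_b G) (g_c G) (g_d G) qg
     (s_cb G) (s_bc G) (s_cd G) (s_dc G) hk).
  apply: eq_bigr => l _; rewrite Ccoef_sum //.
  by have := ltn_ord l; lia.
split => // D HD l hl.
apply: (@uniq_coef D (Ccoef N a b c d q k)) => //.
by rewrite -HD -EX.
Qed.
End Uniq.

Definition Xv (i : nat) : {mpoly C[5]} := 'X_(inord i).

Definition Pq (M : nat) : {mpoly C[5]} := \prod_(e < M) (Xv 4 ^+ e.+1 - 1).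
Definition Pp (M i j : nat) : {mpoly C[5]} :=
  \prod_(e1 < M.+1) \prod_(e2 < M.+1) (Xv i * Xv 4 ^+ e1 - Xv j * Xv 4 ^+ e2).
Definition PP (N : nat) : {mpoly C[5]} :=
  let M := (4 * N + 4)%N in
  Xv 4 * Xv 0 * Xv 1 * Xv 2 * Xv 3 * Pq M *
  (Pp M 0 1 * Pp M 1 0 * Pp M 0 2 * Pp M 2 0 * Pp M 0 3 * Pp M 3 0 *
   Pp M 1 2 * Pp M 2 1 * Pp M 1 3 * Pp M 3 1 * Pp M 2 3 * Pp M 3 2).

Section Ev.
Variable v : 'I_5 -> C.

Lemma meval_prod (I : Type) (r : seq I) (P : pred I) (F : I -> {mpoly C[5]}) :
  (\prod_(i <- r | P i) F i).@[v] = \prod_(i <- r | P i) (F i).@[v].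
Proof. exact: (big_morph _ (mevalM v) (meval1 v)). Qed.

Lemma mevalXn (p : {mpoly C[5]}) n : (p ^+ n).@[v] = p.@[v] ^+ n.
Proof. by elim: n => [|n IH]; rewrite ?expr0 ?meval1 // !exprS mevalM IH. Qed.
End Ev.

Lemma XvE i a b c d q : (i < 5)%N -> (Xv i).@[pt5 a b c d q] = nth 0 [:: a; b; c; d; q] i.
Proof. by move=> hi; rewrite /Xv mevalXU /pt5 inordK. Qed.

Lemma PqE M v : (Pq M).@[v] = \prod_(e < M) ((Xv 4).@[v] ^+ e.+1 - 1).
Proof. by rewrite meval_prod; apply: eq_bigr => e _; rewrite mevalB mevalXn meval1. Qed.

Lemma PpE M i j v : (Pp M i j).@[v] =
  \prod_(e1 < M.+1) \prod_(e2 < M.+1) ((Xv i).@[v] * (Xv 4).@[v] ^+ e1 - (Xv j).@[v] * (Xv 4).@[v] ^+ e2).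
Proof.
rewrite meval_prod; apply: eq_bigr => e1 _; rewrite meval_prod; apply: eq_bigr => e2 _.
by rewrite mevalB !mevalM !mevalXn.
Qed.

Lemma sep_of_Pp M i j a b c d q : (i < 5)%N -> (j < 5)%N ->
  (Pp M i j).@[pt5 a b c d q] != 0 ->
  sep q (nth 0 [:: a; b; c; d; q] i) (nth 0 [:: a; b; c; d; q] j) M.
Proof.
move=> hi hj; rewrite PpE !XvE // => /prodf_neq0 h e1 e2 h1 h2.
have := h (Ordinal (h1 : e1 < M.+1)%N) isT; move/prodf_neq0 => /(_ (Ordinal (h2 : e2 < M.+1)%N) isT).
by rewrite subr_eq0.
Qed.

Lemma qgen_of_Pq M a b c d q : (Pq M).@[pt5 a b c d q] != 0 -> qgen q M.
Proof.
rewrite PqE XvE // => /prodf_neq0 h e he.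
have he' : (e.-1 < M)%N by lia.
have := h (Ordinal he') isT; rewrite /= prednK; last by lia.
by rewrite subr_eq0.
Qed.

Lemma gen_of_PP N a b c d q : (PP N).@[pt5 a b c d q] != 0 -> gen N a b c d q.
Proof.
rewrite /PP !mevalM !XvE //.
rewrite !mulf_eq0 !negb_or => /andP[/andP[/andP[/andP[/andP[/andP[h4 h0] h1] h2] h3] hq] hp].
move: hp => /andP[/andP[/andP[/andP[/andP[/andP[/andP[/andP[/andP[/andP[/andP[p01 p10] p02] p20] p03] p30] p12] p21] p13] p31] p23] p32].
apply: Gen => //; first exact: qgen_of_Pq hq.
- exact: (sep_of_Pp _ _ p01).
- exact: (sep_of_Pp _ _ p10).
- exact: (sep_of_Pp _ _ p02).
- exact: (sep_of_Pp _ _ p20).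
- exact: (sep_of_Pp _ _ p03).
- exact: (sep_of_Pp _ _ p30).
- exact: (sep_of_Pp _ _ p12).
- exact: (sep_of_Pp _ _ p21).
- exact: (sep_of_Pp _ _ p13).
- exact: (sep_of_Pp _ _ p31).
- exact: (sep_of_Pp _ _ p23).
- exact: (sep_of_Pp _ _ p32).
Qed.

Lemma odd_sep x y e1 e2 : odd x -> odd y -> x != y -> (x * 2 ^ e1 != y * 2 ^ e2)%N.
Proof.
move=> ox oy xy; elim: e1 e2 => [|e1 IH] [|e2]; rewrite ?expn0 ?muln1 //.
- apply/negP => /eqP E; have := congr1 odd E; rewrite oddM oddX /= ox.
  by rewrite andbF.
- apply/negP => /eqP E; have := congr1 odd E; rewrite oddM oddX /= oy.
  by rewrite andbF.
- by rewrite !expnSr !mulnA eqn_mul2r /= IH.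
Qed.

Lemma sepC x y e1 e2 : odd x -> odd y -> x != y ->
  (x%:R : C) * 2%:R ^+ e1 - y%:R * 2%:R ^+ e2 != 0.
Proof.
by move=> ox oy xy; rewrite subr_eq0 -!natrX -!natrM eqr_nat odd_sep.
Qed.

Lemma PP_neq0 N : PP N != 0.
Proof.
apply/eqP => H0.
have : (PP N).@[pt5 3%:R 5%:R 7%:R 11%:R 2%:R] = 0 by rewrite H0 meval0.
apply/eqP; rewrite /PP !mevalM !XvE //=.
repeat apply: mulf_neq0; rewrite ?pnatr_eq0 //.
- rewrite PqE XvE //=; apply/prodf_neq0 => e _.
  by rewrite subr_eq0 -natrX -[1]/(1%:R) eqr_nat expnS muln_eq1.
all: rewrite PpE !XvE //=; apply/prodf_neq0 => e1 _; apply/prodf_neq0 => e2 _.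
all: by apply: sepC.
Qed.

Unset Implicit Arguments.

Theorem mainTheorem4 (N : nat) :
  exists P : {mpoly C[5]}, P != 0 /\
    forall a b c d q : C, P.@[pt5 a b c d q] != 0 ->
      forall k : nat, (k <= N)%N ->
        expansion N a b c d q k (Ccoef N a b c d q k) /\
        (forall D : nat -> C, expansion N a b c d q k D ->
           forall l : nat, (l <= N)%N -> D l = Ccoef N a b c d q k l).
Proof.
exists (PP N); split; first exact: PP_neq0.
move=> a b c d q hP k hk.
exact: (main_gen (gen_of_PP hP) hk).
Qed.
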